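(* Let $n,r$ be integers with $n\ge r+2\ge 2$, let $\sigma\colon\{1,\dots,r\}\to\{1,\dots,n-1\}$ be injective, and let $\Delta'=(x^{(\sigma(1))}_1,\dots,x^{(\sigma(r))}_r)$. There is a constant $C>0$ such that for every $w$ in the commutator subgroup $[F_r,F_r]$ of $F_r=F(t_1,\dots,t_r)$, $$\mathrm{Area}\big(w(\Delta)\,w(\Delta')^{-1}\big)\le C\cdot|w|^2.$$
   Context: For $\alpha\in\{1,\dots,n\}$ let $F^{(\alpha)}$ be the free group on $a^{(\alpha)}_1,\dots,a^{(\alpha)}_r$, let $\psi\colon F^{(1)}\times\cdots\times F^{(n)}\to\mathbb Z^r$ send each $a^{(\alpha)}_j$ to $e_j$, and $K=\ker\psi$. For $\alpha\in\{1,\dots,n-1\}$, $j\in\{1,\dots,r\}$, $x^{(\alpha)}_j=a^{(\alpha)}_j(a^{(n)}_j)^{-1}$; $X$ is the set of all $x^{(\alpha)}_j$ and $F(X)$ the abstract free group on it; $\Delta=(x^{(1)}_1,x^{(2)}_2,\dots,x^{(r)}_r)$. For $w\in F_r=F(t_1,\dots,t_r)$ and a tuple $S=(s_1,\dots,s_r)$ of elements of $F(X)$, $w(S)\in F(X)$ is the image of $w$ under $t_i\mapsto s_i$; $|w|$ is the word length of $w$ in $F_r$. $[g,h]=ghg^{-1}h^{-1}$. Let $\mathcal R=\mathcal R_1\cup\mathcal R_2$ with $\mathcal R_1=\{[x^{(\alpha)}_i,x^{(\beta)}_i]:\alpha\ne\beta\}$, $\mathcal R_2=\{[x^{(\alpha)}_i,x^{(\beta)}_j(x^{(\gamma)}_j)^{-1}]: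 i\neq j,\ \alpha,\beta,\gamma\in\{1,\dots,n-1\}\text{ pairwise distinct}\}$, a set of defining relators for $K$ on $X$. $\mathrm{Area}(u)$ for $u\in F(X)$ is the least number of conjugates of elements of $\mathcal R^{\pm1}$ whose product equals $u$ in $F(X)$. *)

(* Defs.v *)
From mathcomp Require Import all_boot all_order all_algebra.
Set Implicit Arguments. Unset Strict Implicit. Unset Printing Implicit Defensive.
Import Order.TTheory GRing.Theory Num.Theory.

(* A word over an alphabet A: a list of letters (a, e), where e = true means
   the generator a and e = false means its inverse a^{-1}. *)
Definition word (A : Type) := seq (A * bool).

Section FreeWords.
Variable A : eqType.

Definition inv_letter (l : A * bool) : A * bool := (l.1, ~~ l.2).
Definition inv_word (w : word A) : word A := rev (map inv_letter w).

Definition reduce (w : word A) : word A :=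
  foldr (fun l acc => match acc with
                      | b :: t => if b == inv_letter l then t else l :: acc
                      | [::] => [:: l] end) [::] w.

Definition freely_eq (u v : word A) : Prop := reduce u = reduce v.

Definition comm (g h : word A) : word A := g ++ h ++ inv_word g ++ inv_word h.

Definition gen (a : A) : word A := [:: (a, true)].
End FreeWords.

(* ---------- F_r = F(t_1,...,t_r): letters t_i are encoded by i : nat, 1 <= i <= r *)
Definition valid_t (r : nat) (w : word nat) : bool :=
  all (fun l => (0 < l.1 <= r)%N) w.

(* w belongs to the commutator subgroup [F_r,F_r]: w is (freely) a product of
   commutators of elements of F_r (these generate [F_r,F_r] and the set of
   commutators is closed under inversion). *)
Definition in_commutator_subgroup (r : nat) (w : word nat) : Prop :=
  exists l : seq (word nat * word nat),
    (forall p, p \in l -> valid_t r p.1 && valid_t r p.2) /\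
    freely_eq w (flatten [seq comm p.1 p.2 | p <- l]).

(* ---------- F(X): x^{(alpha)}_j is encoded by (alpha, j), 1<=alpha<=n-1, 1<=j<=r *)
Definition validX (n r : nat) (w : word (nat * nat)) : bool :=
  all (fun l => (0 < l.1.1 < n) && (0 < l.1.2 <= r))%N w.

Definition subst (S : nat -> word (nat * nat)) (w : word nat) : word (nat * nat) :=
  flatten [seq (if l.2 then S l.1 else inv_word (S l.1)) | l <- w].

Definition Delta : nat -> word (nat * nat) := fun i => gen (i, i).
Definition Delta' (sigma : nat -> nat) : nat -> word (nat * nat) :=
  fun i => gen (sigma i, i).

Definition in_R1 (n r : nat) (rho : word (nat * nat)) : Prop :=
  exists i a b, (0 < i <= r)%N /\ (0 < a < n)%N /\ (0 < b < n)%N /\ a <> b /\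
    rho = comm (gen (a, i)) (gen (b, i)).

Definition in_R2 (n r : nat) (rho : word (nat * nat)) : Prop :=
  exists i j a b c, (0 < i <= r)%N /\ (0 < j <= r)%N /\ i <> j /\
    (0 < a < n)%N /\ (0 < b < n)%N /\ (0 < c < n)%N /\
    a <> b /\ a <> c /\ b <> c /\
    rho = comm (gen (a, i)) (gen (b, j) ++ inv_word (gen (c, j))).

Definition in_R (n r : nat) (rho : word (nat * nat)) : Prop :=
  in_R1 n r rho \/ in_R2 n r rho.

Definition prod_of_conjugates (n r : nat) (u : word (nat * nat)) (k : nat) : Prop :=
  exists l : seq (word (nat * nat) * word (nat * nat) * bool),
    size l = k /\
    (forall t, t \in l -> validX n r t.1.1 /\ in_R n r t.1.2) /\
    freely_eq u (flatten [seq t.1.1 ++ (if t.2 then t.1.2 else inv_word t.1.2)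
                                   ++ inv_word t.1.1 | t <- l]).

(* Area(u) <= N : the least number of conjugates of relators^{+-1} whose
   product is u is at most N, i.e. some such representation uses <= N factors. *)
Definition area_le (n r : nat) (u : word (nat * nat)) (N : rat) : Prop :=
  exists k : nat, prod_of_conjugates n r u k /\ (k%:R <= N)%R.

(* Main.v *)
Require Import Defs.
From mathcomp Require Import all_boot all_order all_algebra zify.
Import Order.TTheory GRing.Theory Num.Theory.
Set Implicit Arguments. Unset Strict Implicit. Unset Printing Implicit Defensive.

Section Free.
Variable A : eqType.
Implicit Types (u v w a b g : word A) (l : A * bool).

Definition rstep l (acc : word A) : word A :=
  match acc with
  | b :: t => if b == inv_letter l then t else l :: acc
  | [::] => [:: l] end.

Lemma reduceE w : reduce w = foldr rstep [::] w.
Proof. by []. Qed.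

Lemma reduce_cons l w : reduce (l :: w) = rstep l (reduce w).
Proof. by []. Qed.

Fixpoint irr (w : word A) : bool :=
  match w with
  | x :: ((y :: _) as t) => (y != inv_letter x) && irr t
  | _ => true end.

Lemma irr_tail x t : irr (x :: t) -> irr t.
Proof. by case: t => //= y t /andP[]. Qed.

Lemma inv_letterK l : inv_letter (inv_letter l) = l.
Proof. by case: l => x e; rewrite /inv_letter /= negbK. Qed.

Lemma irr_step l X : irr X -> irr (rstep l X).
Proof.
case: X => //= b t H; case: ifP => Hb; first exact: irr_tail H.
by rewrite /= Hb H.
Qed.

Lemma irr_foldr acc s : irr acc -> irr (foldr rstep acc s).
Proof. by move=> H; elim: s => //= l s IH; apply: irr_step. Qed.

Lemma irr_reduce w : irr (reduce w).
Proof. exact: irr_foldr. Qed.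

Lemma rstep_cancel l X : irr X -> rstep l (rstep (inv_letter l) X) = X.
Proof.
case: X => [|b t] /=; first by rewrite eqxx.
rewrite inv_letterK; case: eqP => [->|Hb] H.
  case: t H => [|c t'] //= /andP[Hc _]; by rewrite (negbTE Hc).
by rewrite /= eqxx.
Qed.

Lemma rstep_foldr acc l s : irr acc ->
  rstep l (foldr rstep acc s) = foldr rstep acc (rstep l s).
Proof.
move=> Ha; case: s => [|b t] //=.
case: eqP => [->|_] //=.
by rewrite rstep_cancel //; apply: irr_foldr.
Qed.

Lemma foldr_reduce acc u : irr acc -> foldr rstep acc u = foldr rstep acc (reduce u).
Proof.
move=> Ha; elim: u => //= l u IH.
by rewrite IH rstep_foldr.
Qed.

Lemma reduce_irr X : irr X -> reduce X = X.
Proof.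
elim: X => //= x t IH H.
rewrite IH; last exact: irr_tail H.
case: t H {IH} => //= y t /andP[Hy _]; by rewrite (negbTE Hy).
Qed.

Lemma reduceK w : reduce (reduce w) = reduce w.
Proof. exact/reduce_irr/irr_reduce. Qed.

Lemma reduce_cat_foldr u v : reduce (u ++ v) = foldr rstep (reduce v) u.
Proof. by rewrite reduceE foldr_cat. Qed.

Lemma reduce_catr u v : reduce (u ++ v) = reduce (u ++ reduce v).
Proof. by rewrite !reduce_cat_foldr reduceK. Qed.

Lemma reduce_catl u v : reduce (u ++ v) = reduce (reduce u ++ v).
Proof.
rewrite !reduce_cat_foldr; apply: foldr_reduce; exact: irr_reduce.
Qed.

Lemma free_cat u u' v v' : freely_eq u u' -> freely_eq v v' ->
  freely_eq (u ++ v) (u' ++ v').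
Proof.
rewrite /freely_eq => H1 H2.
by rewrite reduce_catl reduce_catr H1 H2 -reduce_catr -reduce_catl.
Qed.

Lemma inv_word_cat u v : inv_word (u ++ v) = inv_word v ++ inv_word u.
Proof. by rewrite /inv_word map_cat rev_cat. Qed.

Lemma inv_wordK u : inv_word (inv_word u) = u.
Proof.
rewrite /inv_word map_rev revK -map_comp.
by rewrite (eq_map (g := id)) ?map_id // => l; rewrite /= inv_letterK.
Qed.

Lemma inv_word_cons l u : inv_word (l :: u) = inv_word u ++ [:: inv_letter l].
Proof. by rewrite -cat1s inv_word_cat. Qed.

Lemma inv_word_nil : inv_word [::] = [::] :> word A.
Proof. by []. Qed.

Lemma reduce_invr u : reduce (u ++ inv_word u) = [::].
Proof.
elim: u => //= l u IH.
rewrite inv_word_cons catA reduce_catl IH /=.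
by rewrite /= eqxx.
Qed.

Lemma reduce_invl u : reduce (inv_word u ++ u) = [::].
Proof. by rewrite -{2}(inv_wordK u) reduce_invr. Qed.

Lemma cancel_r a u b : freely_eq (a ++ u ++ inv_word u ++ b) (a ++ b).
Proof.
by rewrite /freely_eq reduce_catr catA (reduce_catl (u ++ inv_word u)) reduce_invr /= -reduce_catr.
Qed.

Lemma cancel_l a u b : freely_eq (a ++ inv_word u ++ u ++ b) (a ++ b).
Proof. by have := cancel_r a (inv_word u) b; rewrite inv_wordK. Qed.

Lemma free_refl u : freely_eq u u. Proof. by []. Qed.
Lemma free_sym u v : freely_eq u v -> freely_eq v u. Proof. by []. Qed.
Lemma free_trans u v w : freely_eq u v -> freely_eq v w -> freely_eq u w.
Proof. by rewrite /freely_eq => ->. Qed.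

Lemma free_inv u v : freely_eq u v -> freely_eq (inv_word u) (inv_word v).
Proof.
move=> H.
apply: (free_trans (v := inv_word u ++ v ++ inv_word v ++ [::])).
  by apply: free_sym; rewrite -{2}(cats0 (inv_word u)); apply: cancel_r.
apply: (free_trans (v := inv_word u ++ u ++ inv_word v)).
  by rewrite cats0; apply: free_cat => //; apply: free_cat.
by rewrite -{2}(cat0s (inv_word v)); rewrite -[X in freely_eq X _]cat0s; apply: cancel_l.
Qed.

End Free.

Section Poc.
Variables n r : nat.
Notation X := (nat * nat)%type.
Implicit Types (u v w a b g : word X).

Definition cw (t : word X * word X * bool) : word X :=
  t.1.1 ++ (if t.2 then t.1.2 else inv_word t.1.2) ++ inv_word t.1.1.

Definition poc u k := prod_of_conjugates n r u k.

Lemma validX_cat u v : validX n r (u ++ v) = validX n r u && validX n r v.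
Proof. exact: all_cat. Qed.

Lemma validX_inv u : validX n r (inv_word u) = validX n r u.
Proof. by rewrite /validX /inv_word all_rev all_map. Qed.

Lemma P_free u v k : poc u k -> freely_eq u v -> poc v k.
Proof.
case=> l [Hs [Hl Hf]] Huv; exists l; split=> //; split=> //.
exact: free_trans (free_sym Huv) Hf.
Qed.

Lemma P_nil : poc [::] 0.
Proof. by exists [::]. Qed.

Lemma P_cat u v k1 k2 : poc u k1 -> poc v k2 -> poc (u ++ v) (k1 + k2).
Proof.
case=> l1 [Hs1 [Hl1 Hf1]] [l2 [Hs2 [Hl2 Hf2]]].
exists (l1 ++ l2); split; first by rewrite size_cat Hs1 Hs2.
split; first by move=> t; rewrite mem_cat => /orP[]; [apply: Hl1 | apply: Hl2].
rewrite map_cat flatten_cat; exact: free_cat.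
Qed.

Lemma P_rel rho : in_R n r rho -> poc rho 1.
Proof.
move=> H; exists [:: (([::], rho), true)]; split=> //; split.
  by move=> t; rewrite inE => /eqP ->.
by rewrite /= !cats0.
Qed.

Lemma conj_flat g (l : seq (word X * word X * bool)) :
  freely_eq (g ++ flatten (map cw l) ++ inv_word g)
            (flatten (map cw (map (fun t => ((g ++ t.1.1, t.1.2), t.2)) l))).
Proof.
elim: l => [|t l IH] /=; first by rewrite /freely_eq reduce_invr.
rewrite -catA.
apply: (free_trans (v := (g ++ cw t ++ inv_word g) ++ (g ++ flatten (map cw l) ++ inv_word g))).
  rewrite -!catA; apply: free_sym.
  by have := cancel_l (g ++ cw t) g (flatten (map cw l) ++ inv_word g); rewrite -!catA.
apply: free_cat => //.
by rewrite /cw /= inv_word_cat -!catA.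
Qed.

Lemma P_conj g u k : validX n r g -> poc u k -> poc (g ++ u ++ inv_word g) k.
Proof.
move=> Hg [l [Hs [Hl Hf]]].
exists (map (fun t => ((g ++ t.1.1, t.1.2), t.2)) l); split; first by rewrite size_map.
split.
  move=> t /mapP[t' Ht' ->] /=; have [H1 H2] := Hl t' Ht'.
  by rewrite validX_cat Hg H1.
apply: free_trans (conj_flat g l).
apply: free_cat => //; apply: free_cat => //.
Qed.

Lemma inv_flat (l : seq (word X * word X * bool)) :
  inv_word (flatten (map cw l)) =
  flatten (map cw (rev (map (fun t => (t.1, ~~ t.2)) l))).
Proof.
elim: l => [|t l IH] //=.
rewrite inv_word_cat IH rev_cons -cats1 map_cat flatten_cat /= cats0.
congr (_ ++ _).
rewrite /cw /= !inv_word_cat inv_wordK -catA.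
by case: t.2 => //=; rewrite inv_wordK.
Qed.

Lemma P_inv u k : poc u k -> poc (inv_word u) k.
Proof.
move=> [l [Hs [Hl Hf]]].
exists (rev (map (fun t => (t.1, ~~ t.2)) l)); split; first by rewrite size_rev size_map.
split.
  move=> t; rewrite mem_rev => /mapP[t' Ht' ->] /=; exact: Hl.
rewrite -inv_flat; exact: free_inv.
Qed.

(* cost-annotated equality *)
Definition D u v k := poc (u ++ inv_word v) k.

Lemma D_free u v : freely_eq u v -> D u v 0.
Proof.
move=> H; apply: P_free P_nil _.
apply: free_sym; rewrite /freely_eq /=.
rewrite -(reduce_invr v) -(cats0 u) -catA (reduce_catl u) H -reduce_catl.
by [].
Qed.

Lemma D_sym u v k : D u v k -> D v u k.
Proof. by move=> H; have := P_inv H; rewrite /D inv_word_cat inv_wordK. Qed.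

Lemma D_trans u v w k1 k2 : D u v k1 -> D v w k2 -> D u w (k1 + k2).
Proof.
move=> H1 H2; apply: P_free (P_cat H1 H2) _.
rewrite -!catA; have := cancel_l u v (inv_word w).
by rewrite -(cats0 (inv_word v ++ _)) /=.
Qed.

Lemma D_left g u v k : validX n r g -> D u v k -> D (g ++ u) (g ++ v) k.
Proof.
move=> Hg H; have := P_conj Hg H.
by rewrite /D inv_word_cat -!catA.
Qed.

Lemma D_right h u v k : D u v k -> D (u ++ h) (v ++ h) k.
Proof.
move=> H; apply: P_free H _.
rewrite /freely_eq inv_word_cat -catA.
by have := cancel_r u h (inv_word v); rewrite /freely_eq => ->.
Qed.

Lemma D_transf u v v' w k1 k2 : D u v k1 -> freely_eq v v' -> D v' w k2 -> D u w (k1 + k2).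
Proof.
move=> H1 H H2; have := D_trans (D_trans H1 (D_free H)) H2; by rewrite addn0.
Qed.

Lemma D_eqr u v v' k : D u v k -> freely_eq v v' -> D u v' k.
Proof. by move=> H1 H; have := D_trans H1 (D_free H); rewrite addn0. Qed.

Lemma D_eql u u' v k : freely_eq u u' -> D u' v k -> D u v k.
Proof. by move=> H H1; have := D_trans (D_free H) H1. Qed.

Lemma comm_inv a b k : validX n r a -> D (a ++ b) (b ++ a) k ->
  D (inv_word a ++ b) (b ++ inv_word a) k.
Proof.
move=> Ha H.
have H1 := D_right (inv_word a) (D_left (g := inv_word a) _ H).
rewrite validX_inv in H1; have {}H1 := D_sym (H1 Ha).
apply: D_eql; last apply: D_eqr H1 _.
  apply: free_sym; have := cancel_r (inv_word a ++ b) a [::].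
  by rewrite !cats0 -!catA.
have := cancel_l [::] a (b ++ inv_word a).
by rewrite /= -!catA.
Qed.

End Poc.

Notation X := (nat * nat)%type.

Lemma flatten_nseq_comm (T : Type) (e : seq T) m :
  flatten (nseq m e) ++ e = e ++ flatten (nseq m e).
Proof. elim: m => [|m IH] /=; first by rewrite cats0. by rewrite -catA IH. Qed.

Lemma inv_nseq (A : eqType) (e : word A) m :
  inv_word (flatten (nseq m e)) = flatten (nseq m (inv_word e)).
Proof.
elim: m => [|m IH] //=.
by rewrite inv_word_cat IH flatten_nseq_comm.
Qed.

Lemma validX_nseq n r (e : word X) m : validX n r e -> validX n r (flatten (nseq m e)).
Proof. by move=> H; elim: m => //= m IH; rewrite validX_cat H IH. Qed.

Lemma comm_pow n r (e g : word X) m : validX n r e -> D n r (g ++ e) (e ++ g) 1 ->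
  D n r (g ++ flatten (nseq m e)) (flatten (nseq m e) ++ g) m.
Proof.
move=> He H; elim: m => [|m IH] /=.
  by apply: D_free; rewrite cats0.
have H1 := D_right (flatten (nseq m e)) H.
have H2 := D_left He IH.
rewrite -!catA in H1; rewrite -catA; exact: (D_trans H1 H2).
Qed.

Definition Dp (d : word X) m := flatten (nseq m d).
Definition dp (d : word X) p q := Dp d p ++ inv_word (Dp d q).

Lemma validX_dp n r d p q : validX n r d -> validX n r (dp d p q).
Proof. by move=> H; rewrite /dp validX_cat validX_inv !validX_nseq. Qed.

Lemma comm_dp n r (d g : word X) p q : validX n r d -> validX n r g ->
  D n r (g ++ d) (d ++ g) 1 -> D n r (g ++ dp d p q) (dp d p q ++ g) (p + q).
Proof.
move=> Hd Hg H.
have Hi : D n r (g ++ inv_word d) (inv_word d ++ g) 1.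
  by apply: D_sym; apply: comm_inv => //; apply: D_sym.
have HP := comm_pow p Hd H.
have Hdi : validX n r (inv_word d) by rewrite validX_inv.
have HQ := comm_pow q Hdi Hi.
have HP1 := D_right (flatten (nseq q (inv_word d))) HP.
have HQ1 := D_left (validX_nseq p Hd) HQ.
rewrite -!catA in HP1.
rewrite /dp /Dp inv_nseq -!catA.
exact: D_trans HP1 HQ1.
Qed.

Definition upd (tau : nat -> nat) i a := fun j => if j == i then a else tau j.
Definition asg (tau : nat -> nat) : nat -> word X := fun j => gen (tau j, j).
Definition cnt i b (w : word nat) := count (pred1 (i, b)) w.

Section Step.
Variables (n r : nat) (tau : nat -> nat) (i alpha : nat).
Hypothesis Hi : (0 < i <= r)%N.
Hypothesis Hal : (0 < alpha < n)%N.
Hypothesis Htau : forall j, (0 < j <= r)%N -> (0 < tau j < n)%N.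
Hypothesis Hinj : forall j j', (0 < j <= r)%N -> (0 < j' <= r)%N -> tau j = tau j' -> j = j'.
Hypothesis Hfree : forall j, (0 < j <= r)%N -> tau j <> alpha.

Let A := gen (alpha, i).
Let B := gen (tau i, i).
Let d := A ++ inv_word B.

Lemma validA : validX n r A. Proof. by rewrite /validX /= Hal Hi. Qed.
Lemma validB : validX n r B. Proof. by rewrite /validX /= Htau // Hi. Qed.
Lemma validd : validX n r d. Proof. by rewrite validX_cat validX_inv validA validB. Qed.

Lemma valid_asg j : (0 < j <= r)%N -> validX n r (asg tau j).
Proof. by move=> Hj; rewrite /validX /asg /= Htau // Hj. Qed.

Lemma com_letter j : (0 < j <= r)%N -> D n r (asg tau j ++ d) (d ++ asg tau j) 1.
Proof.
move=> Hj; case: (eqVneq j i) => [->|Hji].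
  apply: P_free (P_rel (rho := comm B A) _) _.
    left; exists i, (tau i), alpha; do !split => //; first exact: Htau.
    by apply: Hfree.
  rewrite /comm /d /asg -/B !inv_word_cat inv_wordK -!catA.
  by have := cancel_l (B ++ A ++ inv_word B) B (inv_word A); rewrite -!catA.
apply: P_free (P_rel (rho := comm (asg tau j) (A ++ inv_word B)) _) _.
  right; exists j, i, (tau j), alpha, (tau i); do !split => //.
  - exact/eqP.
  - exact: Htau.
  - exact: Htau.
  - exact: Hfree.
  - by move/(Hinj Hj Hi)=> E; move: Hji; rewrite E eqxx.
  - by move=> E; apply: (Hfree Hi); rewrite E.
by rewrite /comm /D /d inv_word_cat -!catA.
Qed.

Lemma validL j b : (0 < j <= r)%N ->
  validX n r (if b then asg tau j else inv_word (asg tau j)).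
Proof. by move=> Hj; case: b; rewrite ?validX_inv valid_asg. Qed.

Lemma com_gen j b p q : (0 < j <= r)%N ->
  D n r ((if b then asg tau j else inv_word (asg tau j)) ++ dp d p q)
        (dp d p q ++ (if b then asg tau j else inv_word (asg tau j))) (p + q).
Proof.
move=> Hj; apply: comm_dp; [exact: validd | exact: validL |].
case: b; first exact: com_letter.
apply: comm_inv; first exact: valid_asg.
exact: com_letter.
Qed.

Lemma subst_cons (S : nat -> word X) j b w :
  subst S ((j, b) :: w) = (if b then S j else inv_word (S j)) ++ subst S w.
Proof. by []. Qed.

Lemma cnt_cons k b j b' w : cnt k b ((j, b') :: w) = ((j == k) && (b' == b)) + cnt k b w.
Proof. by []. Qed.

Lemma comb SY SZ Yl Zl p q p' q' k k2 :
  validX n r Yl ->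
  D n r SY (dp d p q ++ SZ) k -> D n r (Yl ++ dp d p q) (dp d p' q' ++ Zl) k2 ->
  D n r (Yl ++ SY) (dp d p' q' ++ Zl ++ SZ) (k + k2).
Proof.
move=> HY H1 H2; have H1' := D_left HY H1; have H2' := D_right SZ H2.
rewrite /dp -!catA in H1' H2' *; exact: D_trans H1' H2'.
Qed.

Lemma step_main w : valid_t r w -> exists p q k,
  p + cnt i false w = q + cnt i true w /\ (p + q <= size w)%N /\ (k <= size w ^ 2)%N /\
  D n r (subst (asg (upd tau i alpha)) w) (dp d p q ++ subst (asg tau) w) k.
Proof.
elim: w => [|[j b] w IH].
  by move=> _; exists 0, 0, 0; do !split => //; apply: D_free.
move=> /andP[Hj Hw]; simpl in Hj; have [p [q [k [Hc [Hpq [Hk HD]]]]]] := IH Hw.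
rewrite !subst_cons !cnt_cons.
case: (eqVneq j i) => [Eji|Hji].
- subst j.
  have EY : asg (upd tau i alpha) i = A by rewrite /asg /upd eqxx.
  rewrite EY.
  case: b.
  + exists p.+1, q, (k + (p + q)); do !split.
    * by rewrite /=; lia.
    * by rewrite /=; lia.
    * by rewrite /= -!mulnn; nia.
    apply: (comb _ HD); first exact: validA.
    apply: D_eql; last first.
      have := D_left validd (com_gen true p q Hi).
      rewrite /asg -/B /dp /Dp /= => H; rewrite -!catA in H *; exact: H.
    apply: free_sym; exact: (cancel_l A B (dp d p q)).
  + case: p Hc Hpq HD => [|p0] Hc Hpq HD.
    * exists 0, q.+1, (k + (0 + q.+1)); do !split.
      -- by rewrite /=; lia.
      -- by rewrite /=; lia.
      -- by rewrite /= -!mulnn; nia.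
      apply: (comb _ HD); first by rewrite validX_inv validA.
      apply: D_eql (com_gen false 0 q.+1 Hi).
      rewrite /asg -/B /dp /Dp.
      have E : flatten (nseq q.+1 d) = flatten (nseq q d) ++ d by rewrite flatten_nseq_comm.
      rewrite E inv_word_cat /d inv_word_cat inv_wordK !cat0s.
      apply: free_sym.
      exact: (cancel_l [::] B (inv_word A ++ inv_word (flatten (nseq q (A ++ inv_word B))))).
    * exists p0, q, (k + (p0 + q)); do !split.
      -- by move: Hc; rewrite /=; lia.
      -- by move: Hpq; rewrite /=; lia.
      -- by move: Hpq Hk; rewrite /= -!mulnn; nia.
      apply: (comb _ HD); first by rewrite validX_inv validA.
      apply: D_eql (com_gen false p0 q Hi).
      rewrite /asg -/B /dp /Dp.
      have E : flatten (nseq p0.+1 d) = (A ++ inv_word B) ++ flatten (nseq p0 d) by [].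
      rewrite E -!catA.
      exact: (cancel_l [::] A (inv_word B ++ flatten (nseq p0 d) ++ inv_word (flatten (nseq q d)))).
- have EY : asg (upd tau i alpha) j = asg tau j by rewrite /asg /upd (negbTE Hji).
  rewrite EY; exists p, q, (k + (p + q)); do !split.
  + by rewrite /=; lia.
  + by rewrite /=; lia.
  + by rewrite /= -!mulnn; nia.
  apply: (comb _ HD); first exact: validL.
  exact: com_gen.
Qed.

Lemma step w : valid_t r w -> cnt i true w = cnt i false w ->
  exists k, (k <= size w ^ 2)%N /\
  D n r (subst (asg (upd tau i alpha)) w) (subst (asg tau) w) k.
Proof.
move=> Hw Hc; have [p [q [k [Hc' [_ [Hk HD]]]]]] := step_main Hw.
have Epq : p = q by lia.
subst q; exists k; split => //; apply: D_eqr HD _.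
by rewrite /dp -catA; exact: (cancel_r [::] (Dp d p) (subst (asg tau) w)).
Qed.
End Step.

Lemma cnt_invl k (l : nat * bool) :
  (l == (k, true)) = (inv_letter l == (k, false)) /\
  (l == (k, false)) = (inv_letter l == (k, true)).
Proof. by case: l => x [] /=; rewrite /inv_letter /= !xpair_eqE /= ?andbT ?andbF. Qed.

Section Cnt.
Variables (A : eqType) (k : A).
Local Notation cT w := (count (pred1 (k, true)) w).
Local Notation cF w := (count (pred1 (k, false)) w).

Lemma cnt_reduce (w : word A) : cT (reduce w) + cF w = cT w + cF (reduce w).
Proof.
elim: w => [|[x e] w IH] //.
rewrite reduce_cons /=.
case E: (reduce w) IH => [|b t] /= IH.
  rewrite !xpair_eqE.
  by case: e; case: (x == k) => /=; lia.
case: eqP => [Hb|Hb].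
  move: IH; rewrite /= Hb /inv_letter /= !xpair_eqE; clear Hb E.
  by case: e; case: (x == k) => /=; lia.
move: IH; rewrite /= !xpair_eqE; clear Hb.
by case: e; case: (x == k) => /=; lia.
Qed.

Lemma count_inv b (w : word A) :
  count (pred1 (k, b)) (inv_word w) = count (pred1 (k, ~~ b)) w.
Proof.
rewrite /inv_word count_rev count_map; apply: eq_count => l /=.
by case: l => x [] ; case: b; rewrite /inv_letter /= !xpair_eqE.
Qed.

Lemma cnt_flat_comm (l : seq (word A * word A)) :
  cT (flatten [seq comm p.1 p.2 | p <- l]) = cF (flatten [seq comm p.1 p.2 | p <- l]).
Proof.
elim: l => [|p l IH] //=.
rewrite !count_cat !count_inv /= IH; congr (_ + _); by rewrite addnA [RHS]addnA addnC.
Qed.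

Lemma comm_cnt_gen (w : word A) l :
  freely_eq w (flatten [seq comm p.1 p.2 | p <- l]) -> cT w = cF w.
Proof.
move=> Hf.
have H1 := cnt_reduce w.
have H2 := cnt_reduce (flatten [seq comm p.1 p.2 | p <- l]).
have H3 := cnt_flat_comm l.
rewrite /freely_eq in Hf; rewrite Hf in H1.
lia.
Qed.
End Cnt.

Lemma comm_cnt r w k : in_commutator_subgroup r w -> cnt k true w = cnt k false w.
Proof. by case=> l [_ Hf]; exact: (comm_cnt_gen k Hf). Qed.

Definition okt n r (tau : nat -> nat) :=
  (forall j, (0 < j <= r)%N -> (0 < tau j < n)%N) /\
  (forall j j', (0 < j <= r)%N -> (0 < j' <= r)%N -> tau j = tau j' -> j = j').

Lemma spare n r tau : (r + 2 <= n)%N -> (forall j, (0 < j <= r)%N -> (0 < tau j < n)%N) ->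
  exists s0, (0 < s0 < n)%N /\ forall j, (0 < j <= r)%N -> tau j <> s0.
Proof.
move=> Hn Ht.
have Hna : ~~ all (fun v => v \in map tau (iota 1 r)) (iota 1 n.-1).
  apply/negP => /allP Hs.
  have := uniq_leq_size (iota_uniq 1 n.-1) Hs.
  rewrite size_iota size_map size_iota; lia.
rewrite -has_predC in Hna; case/hasP: Hna => v Hv /= Hvn.
exists v; split.
  by move: Hv; rewrite mem_iota; lia.
move=> j Hj E; move/negP: Hvn; apply; rewrite -E; apply: map_f.
by rewrite mem_iota; lia.
Qed.

Lemma subst_eq (S S' : nat -> word X) r w : (forall j, (0 < j <= r)%N -> S j = S' j) ->
  valid_t r w -> subst S w = subst S' w.
Proof.
move=> H; elim: w => [|[j b] w IH] //.
move=> /andP[Hj Hw]; rewrite !subst_cons IH // H //.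
Qed.

Lemma okt_upd n r tau i a : okt n r tau -> (0 < i <= r)%N -> (0 < a < n)%N ->
  (forall j, (0 < j <= r)%N -> tau j <> a) -> okt n r (upd tau i a).
Proof.
move=> [Ht Hinj] Hi Ha Hf; split.
  by move=> j Hj; rewrite /upd; case: eqP => _ //; apply: Ht.
move=> j j' Hj Hj'; rewrite /upd.
case: (eqVneq j i) => [->|Hji]; case: (eqVneq j' i) => [->|Hj'i] //.
- by move=> E; exfalso; apply: (Hf j' Hj').
- by move=> E; exfalso; apply: (Hf j Hj).
- exact: Hinj.
Qed.

Lemma move1 n r tau i a w : okt n r tau -> (0 < i <= r)%N -> (0 < a < n)%N ->
  (forall j, (0 < j <= r)%N -> tau j <> a) ->
  valid_t r w -> cnt i true w = cnt i false w ->
  exists k, (k <= size w ^ 2)%N /\ D n r (subst (asg tau) w) (subst (asg (upd tau i a)) w) k.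
Proof.
move=> [Ht Hinj] Hi Ha Hf Hw Hc.
have [k [Hk HD]] := step Hi Ha Ht Hinj Hf Hw Hc.
by exists k; split => //; apply: D_sym.
Qed.

Definition mism r (tau sigma : nat -> nat) := count (fun j => tau j != sigma j) (iota 1 r).

Lemma count_upd (P P' : pred nat) i s : (forall j, j != i -> P j = P' j) ->
  count P' s + count (pred1 i) s * P i = count P s + count (pred1 i) s * P' i.
Proof.
move=> H; elim: s => [|x s IH] //=.
case: (eqVneq x i) => [->|Hx] /=.
  move: IH; rewrite ?eqxx /=; move: (P i) (P' i) (count P' s) (count P s) (count_mem i s) => a b c d e; nia.
move: IH; rewrite /= (H x Hx) add0n; move: (P i) (P' i) (P x) (count P' s) (count P s) (count_mem i s) => a b f c d e; nia.
Qed.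

Lemma mism_upd r tau sigma i a : (0 < i <= r)%N ->
  mism r (upd tau i a) sigma + (tau i != sigma i) = mism r tau sigma + (a != sigma i).
Proof.
move=> Hi; rewrite /mism.
have := count_upd (P := fun j => tau j != sigma j) (P' := fun j => upd tau i a j != sigma j)
  (iota 1 r) (i := i).
have -> : count (pred1 i) (iota 1 r) = 1.
  by rewrite (count_uniq_mem _ (iota_uniq 1 r)) mem_iota; have -> : (1 <= i < 1 + r)%N by lia.
rewrite !mul1n /upd eqxx => -> //.
by move=> j Hj; rewrite (negbTE Hj).
Qed.

Section Chain.
Variables (n r : nat) (sigma : nat -> nat) (w : word nat).
Hypothesis Hn : (r + 2 <= n)%N.
Hypothesis Hsig : okt n r sigma.
Hypothesis Hw : valid_t r w.
Hypothesis Hc : forall i, cnt i true w = cnt i false w.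

Lemma chain m : forall tau, okt n r tau -> (mism r tau sigma <= m)%N ->
  exists k, (k <= 2 * m * size w ^ 2)%N /\
    D n r (subst (asg tau) w) (subst (asg sigma) w) k.
Proof.
elim: m => [|m IH] tau Ht Hm.
  exists 0; split => //; apply: D_free; rewrite (@subst_eq _ (asg sigma) r) //.
  move=> j Hj; rewrite /asg; congr (gen (_, _)).
  apply/eqP; apply: negbNE; apply/negP => Hne.
  have : (0 < mism r tau sigma)%N.
    rewrite /mism -has_count; apply/hasP; exists j => //.
    by rewrite mem_iota; lia.
  by lia.
have Hs2 : (2 * m * size w ^ 2 + size w ^ 2 + size w ^ 2 <= 2 * m.+1 * size w ^ 2)%N.
  by rewrite -!mulnn; nia.
case: (posnP (mism r tau sigma)) => [H0|Hpos].
  have Hm0 : (mism r tau sigma <= m)%N by rewrite H0.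
  have [k [Hk HD]] := IH tau Ht Hm0.
  by exists k; split => //; lia.
move: Hpos; rewrite /mism -has_count => /hasP [i Hi Hne].
have Hir : (0 < i <= r)%N by move: Hi; rewrite mem_iota; lia.
have Hsi : (0 < sigma i < n)%N by apply: Hsig.1.
case: (boolP (has (fun j => tau j == sigma i) (iota 1 r))) => [/hasP [j Hj /eqP Ej]|Hnh].
- have Hjr : (0 < j <= r)%N by move: Hj; rewrite mem_iota; lia.
  have Hji : j != i by apply/eqP => E; move: Hne; rewrite -E Ej E eqxx.
  have [s0 [Hs0 Hs0f]] := spare Hn Ht.1.
  have Ht1 := okt_upd Ht Hjr Hs0 Hs0f.
  have [k1 [Hk1 HD1]] := move1 Ht Hjr Hs0 Hs0f Hw (Hc j).
  have Hun : forall j', (0 < j' <= r)%N -> upd tau j s0 j' <> sigma i.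
    move=> j' Hj'; rewrite /upd; case: (eqVneq j' j) => [_|Hj'j].
      by move=> E; apply: (Hs0f j Hjr); rewrite Ej E.
    move=> E; have := Ht.2 j' j Hj' Hjr; rewrite E Ej => /(_ erefl) E'.
    by move: Hj'j; rewrite E' eqxx.
  have Ht2 := okt_upd Ht1 Hir Hsi Hun.
  have [k2 [Hk2 HD2]] := move1 Ht1 Hir Hsi Hun Hw (Hc i).
  have M1 := mism_upd (upd tau j s0) sigma (sigma i) Hir.
  have M2 := mism_upd tau sigma s0 Hjr.
  have E1 : upd tau j s0 i = tau i by rewrite /upd eq_sym (negbTE Hji).
  rewrite E1 Hne eqxx /= in M1.
  have Hsj : tau j != sigma j.
    apply/eqP; rewrite Ej => /(Hsig.2 i j Hir Hjr) E.
    by move: Hji; rewrite E eqxx.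
  rewrite Hsj in M2.
  have Hm2 : (mism r (upd (upd tau j s0) i (sigma i)) sigma <= m)%N.
    by move: M2; case: (s0 != sigma j) => /=; lia.
  have [k3 [Hk3 HD3]] := IH _ Ht2 Hm2.
  exists (k1 + k2 + k3); split; first by lia.
  exact: D_trans (D_trans HD1 HD2) HD3.
- have Hun : forall j', (0 < j' <= r)%N -> tau j' <> sigma i.
    move=> j' Hj' E; move/hasP: Hnh; apply; exists j'; last by rewrite E.
    by rewrite mem_iota; lia.
  have Ht2 := okt_upd Ht Hir Hsi Hun.
  have [k1 [Hk1 HD1]] := move1 Ht Hir Hsi Hun Hw (Hc i).
  have M1 := mism_upd tau sigma (sigma i) Hir.
  rewrite Hne eqxx /= in M1.
  have Hm2 : (mism r (upd tau i (sigma i)) sigma <= m)%N by lia.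
  have [k3 [Hk3 HD3]] := IH _ Ht2 Hm2.
  exists (k1 + k3); split; first by lia.
  exact: D_trans HD1 HD3.
Qed.
End Chain.

Theorem lemma3p12 (n r : nat) (sigma : nat -> nat) :
  (r + 2 <= n)%N ->
  (forall i, (0 < i <= r)%N -> (0 < sigma i < n)%N) ->
  (forall i j, (0 < i <= r)%N -> (0 < j <= r)%N -> sigma i = sigma j -> i = j) ->
  exists C : rat, (0 < C)%R /\
    forall w : word nat,
      valid_t r w -> reduce w = w -> in_commutator_subgroup r w ->
      area_le n r (subst Delta w ++ inv_word (subst (Delta' sigma) w))
              (C * ((size w) ^ 2)%:R)%R.
Proof.
move=> Hn Hs Hinj.
exists ((2 * r + 1)%:R)%R; split; first by rewrite ltr0n addn1.
move=> w Hw _ Hcs.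
have Hc : forall i, cnt i true w = cnt i false w by move=> i; exact: comm_cnt Hcs.
have Hsig : okt n r sigma by split.
have Hid : okt n r id by split => [j Hj|j j' _ _ ->] //=; lia.
have Hmis : (mism r id sigma <= r)%N.
  by rewrite /mism; apply: leq_trans (count_size _ _) _; rewrite size_iota.
have [k [Hk HD]] := chain Hn Hsig Hw Hc Hid Hmis.
exists k; split; first exact: HD.
rewrite -natrM ler_nat.
apply: leq_trans Hk _; rewrite -!mulnn; nia.
Qed.
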